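(* Not every small set is small$^\star$; that is, $\mathcal S^\star\subsetneq\mathcal S$: there exists a small set $X\subseteq 2^\omega$ which is not small$^\star$.
   Context: A set $X\subseteq 2^\omega$ is small ($X\in\mathcal S$) if there is a sequence $\{(I_n,J_n):n\in\omega\}$ such that each $I_n$ is a finite subset of $\omega$, $I_n\cap I_m=\emptyset$ for $n\neq m$, $J_n\subseteq 2^{I_n}$ (functions from $I_n$ to $\{0,1\}$), $\sum_{n\in\omega}\frac{|J_n|}{2^{|I_n|}}<\infty$, and $X\subseteq\{x\in 2^\omega: \text{for infinitely many } n,\ x\restriction I_n\in J_n\}$. A set $X$ is small$^\star$ ($X\in\mathcal S^\star$) if it is small witnessed by such a sequence in which additionally the $I_n$ are consecutive intervals, i.e. there is a strictly increasing sequence of integers $\{k_n:n\in\omega\}$ with $I_n=[k_n,k_{n+1})$ for every $n$. *)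

(* Defs.v *)
From Stdlib Require Import Reals List Lia.
Import ListNotations.
Open Scope R_scope.

Definition cantor := nat -> bool.

(* x restricted to the finite set I (given as a duplicate-free list),
   encoded as the list of values of x along the list I.  A function
   I -> 2 is thus a list of booleans of length |I|. *)
Definition restr (x : cantor) (I : list nat) : list bool := map x I.

(* A witnessing sequence {(I_n, J_n)} : I_n finite subsets of omega, pairwise
   disjoint; J_n a set of functions I_n -> 2 (encoded as duplicate-free
   lists of boolean lists of length |I_n|); sum |J_n| / 2^|I_n| < oo. *)
Record small_seq (I : nat -> list nat) (J : nat -> list (list bool)) : Prop := {
  ss_nodupI : forall n, NoDup (I n);
  ss_disj : forall n m i, n <> m -> In i (I n) -> ~ In i (I m);
  ss_nodupJ : forall n, NoDup (J n);
  ss_Jfun : forall n s, In s (J n) -> length s = length (I n);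
  ss_sum : exists B : R, forall N,
      sum_f_R0 (fun n => INR (length (J n)) / 2 ^ length (I n)) N <= B
}.

Definition io_in (I : nat -> list nat) (J : nat -> list (list bool)) (x : cantor) : Prop :=
  forall N, exists n, (N <= n)%nat /\ In (restr x (I n)) (J n).

Definition small (X : cantor -> Prop) : Prop :=
  exists I J, small_seq I J /\ forall x, X x -> io_in I J x.

Definition small_star (X : cantor -> Prop) : Prop :=
  exists (k : nat -> nat) I J,
    (forall n, (k n < k (S n))%nat) /\
    (forall n, I n = seq (k n) (k (S n) - k n)) /\
    small_seq I J /\ forall x, X x -> io_in I J x.

(* Main.v *)
Require Import Defs.
From Stdlib Require Import Reals List Lia Arith Bool FunctionalExtensionality Classical Lra ClassicalEpsilon.
Import ListNotations.
Open Scope R_scope.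

Definition upd (z : nat -> bool) (K : nat) (b : bool) : nat -> bool :=
  fun i => if Nat.eqb i K then b else z i.

Fixpoint cnt (K : nat) (f : (nat -> bool) -> bool) : nat :=
  match K with
  | O => if f (fun _ => false) then 1%nat else 0%nat
  | S K => (cnt K (fun z => f (upd z K true)) + cnt K (fun z => f (upd z K false)))%nat
  end.

Lemma cnt_ext : forall K f g, (forall z, f z = g z) -> cnt K f = cnt K g.
Proof.
  induction K; intros f g H; simpl.
  - rewrite H; reflexivity.
  - f_equal; apply IHK; intro; apply H.
Qed.


Lemma cnt_le : forall K f g, (forall z, f z = true -> g z = true) -> (cnt K f <= cnt K g)%nat.
Proof.
  induction K; intros f g H; simpl.
  - destruct (f _) eqn:E; [rewrite (H _ E); lia | lia].
  - pose proof (IHK (fun z => f (upd z K true)) (fun z => g (upd z K true)) ltac:(intros; apply H; auto)).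
    pose proof (IHK (fun z => f (upd z K false)) (fun z => g (upd z K false)) ltac:(intros; apply H; auto)).
    lia.
Qed.

Lemma cnt_or : forall K f g, (cnt K (fun z => f z || g z) <= cnt K f + cnt K g)%nat.
Proof.
  induction K; intros f g; simpl.
  - destruct (f _), (g _); simpl; lia.
  - pose proof (IHK (fun z => f (upd z K true)) (fun z => g (upd z K true))).
    pose proof (IHK (fun z => f (upd z K false)) (fun z => g (upd z K false))).
    simpl in *. lia.
Qed.

Lemma cnt_true : forall K, cnt K (fun _ => true) = (2 ^ K)%nat.
Proof. induction K; simpl; auto. rewrite IHK. lia. Qed.

Lemma cnt_false : forall K, cnt K (fun _ => false) = 0%nat.
Proof. induction K; simpl; auto. rewrite IHK. lia. Qed.

Lemma cnt_exists : forall K f, (cnt K f < 2 ^ K)%nat -> exists z, f z = false.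
Proof.
  intros K f H. apply NNPP; intro Hn.
  assert (Hall : forall z, f z = true).
  { intro z. destruct (f z) eqn:E; auto. exfalso; apply Hn; eauto. }
  rewrite (cnt_ext K f (fun _ => true) Hall), cnt_true in H. lia.
Qed.

Lemma upd_comm : forall z p q b c, p <> q -> upd (upd z p b) q c = upd (upd z q c) p b.
Proof.
  intros. apply functional_extensionality; intro i. unfold upd.
  destruct (Nat.eqb_spec i q), (Nat.eqb_spec i p); subst; auto; lia.
Qed.

Lemma cnt_half : forall K p c g, (p < K)%nat ->
  (forall z b, g (upd z p b) = g z) ->
  (2 * cnt K (fun z => Bool.eqb (z p) c && g z) = cnt K g)%nat.
Proof.
  induction K; intros p c g Hp Hg; [lia|]. simpl.
  destruct (Nat.eq_dec p K) as [->|Hne].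
  - rewrite (cnt_ext K (fun z => g (upd z K true)) g) by (intro; apply Hg).
    rewrite (cnt_ext K (fun z => g (upd z K false)) g) by (intro; apply Hg).
    assert (E: forall b, cnt K (fun z => Bool.eqb (upd z K b K) c && g (upd z K b)) =
                    if Bool.eqb b c then cnt K g else 0%nat).
    { intro b. unfold upd at 1. rewrite Nat.eqb_refl.
      destruct (Bool.eqb b c); simpl.
      - apply cnt_ext; intro; apply Hg.
      - apply cnt_false. }
    rewrite !E. destruct c; simpl; lia.
  - assert (Hp' : (p < K)%nat) by lia.
    assert (E: forall b, cnt K (fun z => Bool.eqb (upd z K b p) c && g (upd z K b)) =
                         cnt K (fun z => Bool.eqb (z p) c && g (upd z K b))).
    { intro b; apply cnt_ext; intro z. unfold upd at 1.
      destruct (Nat.eqb_spec p K); [lia|reflexivity]. }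
    rewrite !E.
    rewrite <- (IHK p c (fun z => g (upd z K true))), <- (IHK p c (fun z => g (upd z K false))); auto.
    + lia.
    + intros z b. rewrite upd_comm by lia. apply Hg.
    + intros z b. rewrite upd_comm by lia. apply Hg.
Qed.

Fixpoint lbeq (l1 l2 : list bool) : bool :=
  match l1, l2 with
  | [], [] => true
  | a :: l1, b :: l2 => Bool.eqb a b && lbeq l1 l2
  | _, _ => false
  end.

Lemma lbeq_spec : forall l1 l2, lbeq l1 l2 = true <-> l1 = l2.
Proof.
  induction l1; destruct l2; simpl; split; intro H; try discriminate; auto.
  - apply andb_prop in H as [H1 H2]. apply Bool.eqb_prop in H1. apply IHl1 in H2. subst; auto.
  - injection H as -> ->. rewrite Bool.eqb_reflx. simpl. apply IHl1; auto.
Qed.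

Lemma cnt_proj : forall P K s, NoDup P -> (forall p, In p P -> p < K)%nat ->
  (cnt K (fun z => lbeq (map z P) s) <= 2 ^ (K - length P))%nat.
Proof.
  induction P as [|p P IH]; intros K s Hnd Hb.
  - simpl. rewrite Nat.sub_0_r, <- cnt_true. apply cnt_le; auto.
  - destruct s as [|c s].
    + simpl. rewrite cnt_false. lia.
    + inversion Hnd; subst.
      assert (Hlen : (length (p :: P) <= K)%nat).
      { eapply Nat.le_trans; [apply NoDup_incl_length with (l' := seq 0 K)|rewrite length_seq; lia]; auto. intros q Hq. apply in_seq. specialize (Hb q Hq). lia. }
      simpl in Hlen.
      pose proof (cnt_half K p c (fun z => lbeq (map z P) s) (Hb p (or_introl eq_refl))) as Hh.
      assert (Hinv: forall z b, lbeq (map (upd z p b) P) s = lbeq (map z P) s).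
      { intros z b. f_equal. apply map_ext_in. intros q Hq. unfold upd.
        destruct (Nat.eqb_spec q p); subst; tauto. }
      specialize (Hh Hinv).
      rewrite (cnt_ext K _ (fun z => Bool.eqb (z p) c && lbeq (map z P) s)) by reflexivity.
      pose proof (IH K s H2 (fun q Hq => Hb q (or_intror Hq))).
      simpl length.
      replace (K - length P)%nat with (S (K - S (length P))) in H by lia.
      rewrite Nat.pow_succ_r' in H. lia.
Qed.

Lemma cnt_projS : forall S P K, NoDup P -> (forall p, In p P -> p < K)%nat ->
  (cnt K (fun z => existsb (lbeq (map z P)) S) <= length S * 2 ^ (K - length P))%nat.
Proof.
  induction S as [|s S IH]; intros P K Hnd Hb.
  - simpl. rewrite cnt_false. lia.
  - simpl. eapply Nat.le_trans.
    + apply (cnt_or K (fun z => lbeq (map z P) s) (fun z => existsb (lbeq (map z P)) S)).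
    + pose proof (cnt_proj P K s Hnd Hb). pose proof (IH P K Hnd Hb). lia.
Qed.

Fixpoint natsum (g : nat -> nat) (ms : list nat) : nat :=
  match ms with [] => 0%nat | m :: ms => (g m + natsum g ms)%nat end.

Lemma cnt_union : forall (ms : list nat) (Q : nat -> list nat) (J : nat -> list (list bool)) K,
  (forall m, In m ms -> NoDup (Q m)) -> (forall m p, In m ms -> In p (Q m) -> p < K)%nat ->
  (cnt K (fun z => existsb (fun m => existsb (lbeq (map z (Q m))) (J m)) ms)
    <= natsum (fun m => length (J m) * 2 ^ (K - length (Q m))) ms)%nat.
Proof.
  induction ms as [|m ms IH]; intros Q J K H1 H2.
  - simpl. rewrite cnt_false. lia.
  - simpl. eapply Nat.le_trans.
    + apply (cnt_or K (fun z => existsb (lbeq (map z (Q m))) (J m)) (fun z => existsb (fun m => existsb (lbeq (map z (Q m))) (J m)) ms)).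
    + pose proof (cnt_projS (J m) (Q m) K (H1 m (or_introl eq_refl)) (fun p Hp => H2 m p (or_introl eq_refl) Hp)).
      pose proof (IH Q J K (fun m' Hm => H1 m' (or_intror Hm)) (fun m' p Hm => H2 m' p (or_intror Hm))).
      lia.
Qed.

Fixpoint rsuml (f : nat -> R) (ms : list nat) : R :=
  match ms with [] => 0 | m :: ms => f m + rsuml f ms end.

Lemma rsum_seq : forall f L t, (1 <= t)%nat ->
  rsuml f (seq t L) = sum_f_R0 f (t + L - 1) - sum_f_R0 f (t - 1).
Proof.
  induction L; intros t Ht.
  - simpl. replace (t + 0 - 1)%nat with (t - 1)%nat by lia. lra.
  - simpl seq. simpl rsuml. rewrite IHL by lia.
    replace (S t + L - 1)%nat with (t + S L - 1)%nat by lia.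
    replace (S t - 1)%nat with (S (t - 1)) by lia.
    simpl sum_f_R0 at 2. replace (S (t - 1)) with t by lia. lra.
Qed.

Lemma sum_mono : forall a, (forall n, 0 <= a n) -> forall M d, sum_f_R0 a M <= sum_f_R0 a (M + d).
Proof.
  intros a Ha M d. induction d.
  - rewrite Nat.add_0_r. lra.
  - replace (M + S d)%nat with (S (M + d)) by lia. simpl. specialize (Ha (S (M + d))). lra.
Qed.

Lemma tail_small : forall a, (forall n, 0 <= a n) -> (exists B, forall N, sum_f_R0 a N <= B) ->
  exists M, forall t L, (M < t)%nat -> rsuml a (seq t L) < 1.
Proof.
  intros a Ha [B HB].
  assert (H : exists M, forall N, (M <= N)%nat -> sum_f_R0 a N - sum_f_R0 a M < 1).
  { apply NNPP; intro Hn.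
    assert (Hn' : forall M, exists N, (M <= N)%nat /\ sum_f_R0 a N - sum_f_R0 a M >= 1).
    { intro M. apply NNPP; intro H1. apply Hn. exists M. intros N HN.
      apply Rnot_ge_lt. intro H2. apply H1. eauto. }
    assert (Hj : forall j, exists N, sum_f_R0 a N >= INR j).
    { induction j.
      - exists 0%nat. simpl. specialize (Ha 0%nat). lra.
      - destruct IHj as [N HN]. destruct (Hn' N) as [N' [_ HN']]. exists N'.
        rewrite S_INR. lra. }
    destruct (INR_unbounded B) as [j Hj1]. destruct (Hj j) as [N HN].
    specialize (HB N). lra. }
  destruct H as [M HM]. exists M. intros t L Ht.
  destruct L as [|L].
  - simpl. lra.
  - rewrite rsum_seq by lia.
    pose proof (sum_mono a Ha M (t - 1 - M)) as H1.
    replace (M + (t - 1 - M))%nat with (t - 1)%nat in H1 by lia.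
    specialize (HM (t + S L - 1)%nat ltac:(lia)). lra.
Qed.

Lemma geom_bound : forall N, sum_f_R0 (fun n => INR (2 ^ n) / 2 ^ (n + n)) N <= 2.
Proof.
  assert (H : forall N, sum_f_R0 (fun n => INR (2 ^ n) / 2 ^ (n + n)) N = 2 - (/2) ^ N).
  { induction N.
    - simpl. lra.
    - replace (sum_f_R0 (fun n => INR (2 ^ n) / 2 ^ (n + n)) (S N)) with
        (sum_f_R0 (fun n => INR (2 ^ n) / 2 ^ (n + n)) N + INR (2 ^ S N) / 2 ^ (S N + S N)) by reflexivity.
      rewrite IHN, pow_INR, pow_add.
      replace (INR 2) with 2 by (simpl; lra).
      rewrite !pow_inv. simpl. field. apply pow_nonzero; lra. }
  intro N. rewrite H. assert (0 < (/2) ^ N) by (apply pow_lt; lra). lra.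
Qed.

Definition Aset (n : nat) : list nat := seq (n * n) n.
Definition Bset (n : nat) : list nat := seq (n * n + 3 * n + 4) n.
Definition Ig (n : nat) : list nat := Aset n ++ Bset n.

Fixpoint allb (n : nat) : list (list bool) :=
  match n with
  | O => [[]]
  | S n => map (cons true) (allb n) ++ map (cons false) (allb n)
  end.

Lemma allb_length : forall n, length (allb n) = (2 ^ n)%nat.
Proof. induction n; simpl; auto. rewrite length_app, !length_map, IHn. lia. Qed.

Lemma allb_in : forall n w, In w (allb n) <-> length w = n.
Proof.
  induction n; intros w; simpl.
  - split; [intros [<-|[]]; auto | destruct w; simpl; try discriminate; auto].
  - rewrite in_app_iff, !in_map_iff. split.
    + intros [[w' [<- H]]|[w' [<- H]]]; simpl; f_equal; apply IHn; auto.
    + destruct w as [|b w]; simpl; try discriminate. intro H. injection H as H.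
      destruct b; [left|right]; exists w; split; auto; apply IHn; auto.
Qed.

Lemma allb_nodup : forall n, NoDup (allb n).
Proof.
  induction n; simpl.
  - constructor; [simpl; tauto | constructor].
  - apply NoDup_app.
    + apply NoDup_map_NoDup_ForallPairs; auto. intros x y _ _ H; injection H; auto.
    + apply NoDup_map_NoDup_ForallPairs; auto. intros x y _ _ H; injection H; auto.
    + intros a Ha Hb. apply in_map_iff in Ha as [? [<- _]]. apply in_map_iff in Hb as [? [H _]]. discriminate.
Qed.

Definition Jg (n : nat) : list (list bool) := map (fun w => w ++ w) (allb n).

Lemma Ig_length : forall n, length (Ig n) = (n + n)%nat.
Proof. intro n. unfold Ig, Aset, Bset. rewrite length_app, !length_seq. reflexivity. Qed.

Lemma Ig_in : forall n p, In p (Ig n) <->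
  (n * n <= p < n * n + n \/ n * n + 3 * n + 4 <= p < n * n + 4 * n + 4)%nat.
Proof.
  intros n p. unfold Ig, Aset, Bset. rewrite in_app_iff, !in_seq. lia.
Qed.

Lemma Ig_disj_lt : forall n m i, (n < m)%nat -> In i (Ig n) -> In i (Ig m) -> False.
Proof.
  intros n m i Hlt Hn Hm. rewrite Ig_in in Hn, Hm.
  destruct (Nat.eq_dec m (S n)) as [->|Hne].
  - replace (S n * S n)%nat with (n * n + 2 * n + 1)%nat in Hm by ring. lia.
  - assert ((n + 2) * (n + 2) <= m * m)%nat by (apply Nat.mul_le_mono; lia).
    replace ((n + 2) * (n + 2))%nat with (n * n + 4 * n + 4)%nat in H by ring. lia.
Qed.

Lemma Ig_small : small_seq Ig Jg.
Proof.
  constructor.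
  - intro n. unfold Ig. apply NoDup_app; try apply seq_NoDup.
    intros a Ha Hb. unfold Aset, Bset in *. rewrite in_seq in *. lia.
  - intros n m i Hnm Hn Hm.
    destruct (Nat.lt_ge_cases n m) as [Hlt|Hge].
    + exact (Ig_disj_lt n m i Hlt Hn Hm).
    + apply (Ig_disj_lt m n i ltac:(lia) Hm Hn).
  - intro n. unfold Jg. apply NoDup_map_NoDup_ForallPairs; [|apply allb_nodup].
    intros x y Hx Hy H. apply allb_in in Hx, Hy.
    apply app_eq_app in H as [l [[H1 _]|[H1 _]]].
    + assert (length l = 0%nat) by (apply (f_equal (@length bool)) in H1; rewrite length_app in H1; lia).
      destruct l; [|discriminate]. rewrite app_nil_r in H1. auto.
    + assert (length l = 0%nat) by (apply (f_equal (@length bool)) in H1; rewrite length_app in H1; lia).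
      destruct l; [|discriminate]. rewrite app_nil_r in H1. auto.
  - intros n s Hs. unfold Jg in Hs. apply in_map_iff in Hs as [w [<- Hw]].
    apply allb_in in Hw. rewrite length_app, Ig_length, Hw. reflexivity.
  - exists 2. intro N. eapply Rle_trans; [|apply (geom_bound N)]. right.
    apply sum_eq. intros i _. unfold Jg. rewrite length_map, allb_length, Ig_length. reflexivity.
Qed.

Lemma k_mono : forall k : nat -> nat, (forall n, (k n < k (S n))%nat) ->
  forall i j, (i <= j)%nat -> (k i <= k j)%nat.
Proof.
  intros k Hk i j Hij. induction Hij; auto. specialize (Hk m). lia.
Qed.

Lemma k_ge : forall k : nat -> nat, (forall n, (k n < k (S n))%nat) -> forall i, (i <= k i)%nat.
Proof. intros k Hk i. induction i; [lia|]. specialize (Hk i). lia. Qed.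

Lemma cover : forall K, exists n, (n * n + n <= K < (n + 1) * (n + 1) + (n + 1))%nat.
Proof.
  induction K.
  - exists 0%nat. lia.
  - destruct IHK as [n Hn].
    destruct (Nat.eq_dec (S K) ((n + 1) * (n + 1) + (n + 1))) as [E|E].
    + exists (n + 1)%nat. split; [lia|].
      replace ((n + 1 + 1) * (n + 1 + 1))%nat with ((n + 1) * (n + 1) + 2 * n + 3)%nat by ring. lia.
    + exists n. lia.
Qed.

Lemma shift_seq : forall n a b, map (fun p => p - b + a)%nat (seq b n) = seq a n.
Proof.
  induction n; intros a b; simpl; auto. f_equal; [lia|].
  rewrite <- (IHn (S a) (S b)). apply map_ext_in. intros p Hp. apply in_seq in Hp. lia.
Qed.

Lemma natsum_INR : forall ms g f c, (forall m, In m ms -> INR (g m) = c * f m) ->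
  INR (natsum g ms) = c * rsuml f ms.
Proof.
  induction ms; intros g f c H; simpl.
  - lra.
  - rewrite plus_INR, H by (left; auto). rewrite (IHms g f c) by (intros; apply H; right; auto). lra.
Qed.

Lemma step (k : nat -> nat) (J' : nat -> list (list bool)) (e : nat -> R) (M : nat)
  (Hk : forall n, (k n < k (S n))%nat)
  (He : forall m, e m = INR (length (J' m)) / 2 ^ (k (S m) - k m))
  (Htail : forall t L, (M < t)%nat -> rsuml e (seq t L) < 1) :
  forall t (prev : nat -> bool), (M < t)%nat -> exists t' (y : nat -> bool),
    (t < t')%nat /\ (forall p, (p < k t)%nat -> y p = prev p) /\
    (exists n, (t <= n)%nat /\ map y (Aset n) = map y (Bset n) /\ (n * n + 4 * n + 4 <= k t')%nat) /\
    (forall m, (t <= m < t')%nat -> ~ In (map y (seq (k m) (k (S m) - k m))) (J' m)).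
Proof.
  intros t prev Ht.
  pose proof (k_mono k Hk) as Hmono. pose proof (k_ge k Hk) as Hge.
  set (N0 := k t).
  set (u := (N0 * N0 + N0 + t + 1)%nat).
  pose proof (Hge u) as Hku.
  destruct (cover (k u)) as [n [Hn1 Hn2]].
  assert (Hn0 : (N0 <= n)%nat).
  { destruct (Nat.le_gt_cases N0 n) as [|Hlt]; auto.
    assert ((n + 1) * (n + 1) <= N0 * N0)%nat by (apply Nat.mul_le_mono; lia). lia. }
  assert (Hnn : (n <= n * n)%nat) by nia.
  set (t' := (n * n + 4 * n + 4 + u + 1)%nat).
  set (K := k t').
  set (a := (n * n)%nat). set (b := (n * n + 3 * n + 4)%nat).
  set (sg := fun p => if (b <=? p) && (p <? b + n) then (p - b + a)%nat else p).
  set (Q := fun m => map sg (seq (k m) (k (S m) - k m))).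
  set (ms := seq t (t' - t)).
  assert (Hsg_le : forall p, (sg p <= p)%nat).
  { intro p. unfold sg. destruct ((b <=? p) && (p <? b + n)) eqn:E; [|lia].
    apply andb_prop in E as [E1 _]. apply Nat.leb_le in E1. unfold a, b in *. lia. }
  assert (Hsg_id : forall p, (p < b)%nat -> sg p = p).
  { intros p Hp. unfold sg. destruct (Nat.leb_spec b p); [lia|reflexivity]. }
  assert (Hku_b : (k u < b)%nat).
  { unfold b. replace ((n + 1) * (n + 1))%nat with (n * n + 2 * n + 1)%nat in Hn2 by ring. lia. }
  assert (HQnd : forall m, In m ms -> NoDup (Q m)).
  { intros m Hm. unfold Q. destruct (Nat.lt_ge_cases m u) as [Hmu|Hmu].
    - rewrite (map_ext_in _ (fun p => p)).
      + rewrite map_id. apply seq_NoDup.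
      + intros p Hp. apply in_seq in Hp. apply Hsg_id.
        pose proof (Hmono (S m) u ltac:(lia)). lia.
    - apply NoDup_map_NoDup_ForallPairs; [|apply seq_NoDup].
      intros x y Hx Hy Hxy. apply in_seq in Hx, Hy.
      pose proof (Hmono u m Hmu).
      unfold sg in Hxy.
      destruct (Nat.leb_spec b x), (Nat.ltb_spec x (b + n)), (Nat.leb_spec b y), (Nat.ltb_spec y (b + n));
        simpl in Hxy; unfold a, b in *; lia. }
  assert (HQb : forall m p, In m ms -> In p (Q m) -> (p < K)%nat).
  { intros m p Hm Hp. unfold Q in Hp. apply in_map_iff in Hp as [q [<- Hq]].
    apply in_seq in Hq. apply in_seq in Hm. pose proof (Hsg_le q).
    pose proof (Hmono (S m) t' ltac:(unfold ms in Hm; lia)). unfold K. lia. }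
  assert (HQlen : forall m, length (Q m) = (k (S m) - k m)%nat).
  { intro m. unfold Q. rewrite length_map, length_seq. reflexivity. }
  pose proof (cnt_union ms Q J' K HQnd HQb) as Hcnt.
  assert (Hlt : (natsum (fun m => length (J' m) * 2 ^ (K - length (Q m))) ms < 2 ^ K)%nat).
  { apply INR_lt.
    rewrite (natsum_INR ms _ e (2 ^ K)).
    - rewrite pow_INR. replace (INR 2) with 2 by (simpl; lra).
      assert (0 < 2 ^ K) by (apply pow_lt; lra).
      assert (rsuml e ms < 1) by (apply Htail; auto).
      nra.
    - intros m Hm. rewrite He, mult_INR, pow_INR, HQlen. replace (INR 2) with 2 by (simpl; lra).
      assert (Hl : (k (S m) - k m <= K)%nat).
      { apply in_seq in Hm. pose proof (Hmono (S m) t' ltac:(unfold ms in Hm; lia)). unfold K. lia. }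
      replace K with ((K - (k (S m) - k m)) + (k (S m) - k m))%nat at 2 by lia.
      rewrite pow_add. field. apply pow_nonzero. lra. }
  destruct (cnt_exists K _ (Nat.le_lt_trans _ _ _ Hcnt Hlt)) as [z Hz].
  exists t', (fun p => if p <? k t then prev p else z (sg p)).
  split; [unfold t', u; lia|].
  split; [intros p Hp; destruct (Nat.ltb_spec p (k t)); [reflexivity|lia]|].
  split.
  - exists n. split; [unfold N0 in *; pose proof (Hge t); lia|]. split.
    + unfold Aset, Bset. fold a b.
      transitivity (map z (seq a n)).
      * apply map_ext_in. intros p Hp. apply in_seq in Hp.
        destruct (Nat.ltb_spec p (k t)); [unfold a, N0 in *; lia|].
        rewrite Hsg_id; auto. unfold a, b in *; lia.
      * rewrite <- (shift_seq n a b), map_map. apply map_ext_in. intros p Hp. apply in_seq in Hp.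
        destruct (Nat.ltb_spec p (k t)); [unfold a, b, N0 in *; lia|].
        unfold sg. destruct (Nat.leb_spec b p); [|lia]. destruct (Nat.ltb_spec p (b + n)); [|lia].
        reflexivity.
    + pose proof (Hge t'). unfold t' at 1 in H. lia.
  - intros m Hm Hin.
    assert (Heq : map (fun p => if p <? k t then prev p else z (sg p)) (seq (k m) (k (S m) - k m)) = map z (Q m)).
    { unfold Q. rewrite map_map. apply map_ext_in. intros p Hp. apply in_seq in Hp.
      pose proof (Hmono t m ltac:(lia)).
      destruct (Nat.ltb_spec p (k t)); [lia|reflexivity]. }
    rewrite Heq in Hin.
    assert (Htrue : existsb (fun m => existsb (lbeq (map z (Q m))) (J' m)) ms = true).
    { apply existsb_exists. exists m. split.
      - unfold ms. apply in_seq. lia.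
      - apply existsb_exists. exists (map z (Q m)). split; auto. apply lbeq_spec. reflexivity. }
    rewrite Hz in Htrue. discriminate.
Qed.

Definition StepP (k : nat -> nat) (J' : nat -> list (list bool)) (t : nat) (prev : nat -> bool)
  (t' : nat) (y : nat -> bool) : Prop :=
    (t < t')%nat /\ (forall p, (p < k t)%nat -> y p = prev p) /\
    (exists n, (t <= n)%nat /\ map y (Aset n) = map y (Bset n) /\ (n * n + 4 * n + 4 <= k t')%nat) /\
    (forall m, (t <= m < t')%nat -> ~ In (map y (seq (k m) (k (S m) - k m))) (J' m)).

Lemma block_find : forall T : nat -> nat, (forall j, (T j < T (S j))%nat) ->
  forall m, (T 0 <= m)%nat -> exists j, (T j <= m < T (S j))%nat.
Proof.
  intros T HT m. induction m; intro Hm.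
  - exists 0%nat. specialize (HT 0%nat). lia.
  - destruct (Nat.eq_dec (T 0%nat) (S m)) as [E|E].
    + exists 0%nat. specialize (HT 0%nat). lia.
    + destruct (IHm ltac:(lia)) as [j Hj].
      destruct (Nat.eq_dec (S m) (T (S j))) as [E2|E2].
      * exists (S j). specialize (HT (S j)). lia.
      * exists j. lia.
Qed.

Theorem mainTheorem3 : exists X : cantor -> Prop, small X /\ ~ small_star X.
Proof.
  exists (io_in Ig Jg). split.
  - exists Ig, Jg. split; [apply Ig_small | auto].
  - intros [k [I' [J' [Hk [HI [Hss Hcov]]]]]].
    pose proof (k_mono k Hk) as Hmono. pose proof (k_ge k Hk) as Hge.
    set (e := fun m => INR (length (J' m)) / 2 ^ (k (S m) - k m)).
    assert (Hepos : forall m, 0 <= e m).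
    { intro m. unfold e. apply Rmult_le_pos; [apply pos_INR|].
      left. apply Rinv_0_lt_compat, pow_lt. lra. }
    assert (HB : exists B, forall N, sum_f_R0 e N <= B).
    { destruct (ss_sum _ _ Hss) as [B HB]. exists B. intro N.
      rewrite <- (HB N). right. apply sum_eq. intros i _. unfold e. rewrite HI, length_seq. reflexivity. }
    destruct (tail_small e Hepos HB) as [M HM].
    pose proof (step k J' e M Hk (fun m => eq_refl) HM) as Hstep.
    assert (Hex : forall tp : nat * (nat -> bool), exists r : nat * (nat -> bool),
               (M < fst tp)%nat -> StepP k J' (fst tp) (snd tp) (fst r) (snd r)).
    { intros [t prev]. simpl. destruct (Nat.lt_ge_cases M t) as [Ht|Ht].
      - destruct (Hstep t prev Ht) as [t' [y H]]. exists (t', y). intros _. exact H.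
      - exists (t, prev). intro; lia. }
    set (G := fun tp => proj1_sig (constructive_indefinite_description _ (Hex tp))).
    assert (HG : forall tp, (M < fst tp)%nat -> StepP k J' (fst tp) (snd tp) (fst (G tp)) (snd (G tp))).
    { intros tp Htp. unfold G. destruct (constructive_indefinite_description _ (Hex tp)) as [r Hr].
      simpl. auto. }
    set (sq := fun j => nat_rect (fun _ => (nat * (nat -> bool))%type) (S M, fun _ => false) (fun _ r => G r) j).
    set (T := fun j => fst (sq j)). set (F := fun j => snd (sq j)).
    assert (HT : forall j, (M < T j)%nat /\ StepP k J' (T j) (F j) (T (S j)) (F (S j))).
    { induction j.
      - assert (H0 : (M < T 0)%nat) by (unfold T; simpl; lia). split; auto.
        apply (HG (sq 0%nat)). exact H0.
      - destruct IHj as [H1 H2]. assert (H3 : (M < T (S j))%nat) by (destruct H2; lia).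
        split; auto. apply (HG (sq (S j))). exact H3. }
    assert (HTinc : forall j, (T j < T (S j))%nat) by (intro j; apply (HT j)).
    assert (HTge : forall j, (j < T j)%nat).
    { induction j; [pose proof (proj1 (HT 0%nat)); lia|]. specialize (HTinc j). lia. }
    assert (HTmono : forall j d, (T j <= T (j + d))%nat).
    { intros j d. induction d; [rewrite Nat.add_0_r; lia|]. specialize (HTinc (j + d)%nat).
      replace (j + S d)%nat with (S (j + d)) by lia. lia. }
    assert (HFstab : forall d j p, (p < k (T j))%nat -> F (j + d)%nat p = F j p).
    { induction d; intros j p Hp; [rewrite Nat.add_0_r; reflexivity|].
      replace (j + S d)%nat with (S (j + d)) by lia.
      destruct (HT (j + d)%nat) as [_ [_ [Hprev _]]]. rewrite Hprev.
      - apply IHd; auto.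
      - pose proof (Hmono _ _ (HTmono j d)). lia. }
    set (x := fun p => F (S p) p).
    assert (Hx : forall j p, (p < k (T j))%nat -> x p = F j p).
    { intros j p Hp. unfold x. destruct (Nat.le_gt_cases (S p) j) as [Hle|Hgt].
      - replace j with (S p + (j - S p))%nat by lia. symmetry. apply HFstab.
        pose proof (HTge (S p)). pose proof (Hge (T (S p))). lia.
      - replace (S p) with (j + (S p - j))%nat by lia. apply HFstab; auto. }
    assert (Hxio : io_in Ig Jg x).
    { intro N. destruct (HT N) as [_ [_ [_ [[n [Hn1 [Hn2 Hn3]]] _]]]].
      exists n. split; [pose proof (HTge N); lia|].
      assert (EA : map x (Aset n) = map (F (S N)) (Aset n)).
      { apply map_ext_in. intros p Hp. unfold Aset in Hp. apply in_seq in Hp. apply Hx. lia. }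
      assert (EB : map x (Bset n) = map (F (S N)) (Bset n)).
      { apply map_ext_in. intros p Hp. unfold Bset in Hp. apply in_seq in Hp. apply Hx. lia. }
      unfold restr, Ig. rewrite map_app, EA, EB, <- Hn2. unfold Jg. apply in_map_iff.
      exists (map (F (S N)) (Aset n)). split; auto. apply allb_in.
      unfold Aset. rewrite length_map, length_seq. reflexivity. }
    destruct (Hcov x Hxio (T 0%nat)) as [m [Hm Hin]].
    destruct (block_find T HTinc m Hm) as [j Hj].
    destruct (HT j) as [_ [_ [_ [_ Hblk]]]].
    apply (Hblk m Hj). rewrite HI in Hin. unfold restr in Hin.
    rewrite (map_ext_in x (F (S j))) in Hin; auto.
    intros p Hp. apply in_seq in Hp. apply Hx.
    pose proof (Hmono (S m) (T (S j)) ltac:(lia)). lia.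
Qed.
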